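(* Let $H\subset G\subset\Sigma_k$ be subgroups and let $A$ be an object of $H\mathrm{ss}_k$. Then there is a natural isomorphism of based $G$-spaces \[ |I_H^G A|\cong G_+\wedge_H|A|. \]
   Context: $\Delta_{\mathrm{inj}}$ is the category of sets $\{0,\dots,n\}$ and monotone injections. $\Sigma_k$ acts on $(\Delta_{\mathrm{inj}}^{\mathrm{op}})^{\times k}$ by permuting factors. For a group $G$ acting on a category $\mathcal C$, $G\ltimes\mathcal C$ has the objects of $\mathcal C$ and morphisms pairs $(\alpha,f)$ with $\alpha\in G$, $f$ a morphism of $\mathcal C$, with domain that of $f$, target $\alpha$ applied to the target of $f$, and composition $(\alpha,f)\circ(\beta,g)=(\alpha\beta,\beta^{-1}(f)\circ g)$. For $H\subset\Sigma_k$, $H\mathrm{ss}_k$ is the category of functors $H\ltimes(\Delta_{\mathrm{inj}}^{\mathrm{op}})^{\times k}\to\mathrm{Set}_*$ (based $k$-fold multisemisimplicial sets with an $H$-''action'' that also permutes multidegrees). For $H\subset G$, $I_H^G:H\mathrm{ss}_k\to G\mathrm{ss}_k$ is left Kan extension along $H\ltimes(\Delta_{\mathrm{inj}}^{\mathrm{op}})^{\times k}\to G\ltimes(\Delta_{\mathrm{inj}}^{\mathrm{op}})^{\times k}$. The geometric realization $|A|$ of $A\in G\mathrm{ss}_k$ is the realization of its underlying $k$-fold multisemisimplicial set; it carries the left $G$-action $\alpha[u_1,\dots,u_k,a]=[u_{\alpha^{-1}(1)},\dots,u_{\alpha^{-1}(k)},(\alpha,\mathrm{id})_*(a)]$ for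 $(u_1,\dots,u_k)\in\Delta^{\mathbf n}$, $a\in A_{\mathbf n}$. *)

(* Defs.v *)
From Stdlib Require Import Reals Relations ClassicalEpsilon.
From mathcomp Require Import all_boot all_fingroup.

Set Implicit Arguments.
Unset Strict Implicit.
Unset Printing Implicit Defensive.

Definition eqv {T : Type} (R : T -> T -> Prop) : T -> T -> Prop :=
  clos_refl_sym_trans T R.

Definition Quot {T : Type} (R : T -> T -> Prop) : Type :=
  { C : T -> Prop | exists t, C = eqv R t }.

Definition cls {T : Type} (R : T -> T -> Prop) (t : T) : Quot R :=
  exist _ (eqv R t) (ex_intro _ t erefl).

Definition rep {T : Type} {R : T -> T -> Prop} (q : Quot R) : T :=
  proj1_sig (constructive_indefinite_description _ (proj2_sig q)).

Section MultiSemiSimplicial.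
Variable k : nat.

(* Composition in Sigma_k in the usual (function composition) convention:
   pmul a b = a o b.  (MathComp's product is (a * b) x = b (a x).)       *)
Definition pmul (a b : 'S_k) : 'S_k := (b * a)%g.

(* objects of (Δ_inj^op)^k : multidegrees n = (n_1,...,n_k),
   n_i standing for the set {0,...,n_i} *)
Definition mdeg := 'I_k -> nat.

Definition pact (a : 'S_k) (n : mdeg) : mdeg := fun i => n ((a^-1)%g i).

(* morphisms of Δ_inj : monotone injections {0..m} -> {0..n}
   (= strictly increasing maps) *)
Record injmono (m n : nat) := InjMono {
  im_fun :> 'I_m.+1 -> 'I_n.+1 ;
  im_mono : forall i j : 'I_m.+1, (i < j)%N -> (im_fun i < im_fun j)%N }.

(* a morphism n -> m in (Δ_inj^op)^k : for each i a Δ_inj map [m_i] -> [n_i] *)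
Definition Cmor (n m : mdeg) := forall i : 'I_k, injmono (m i) (n i).

Definition Cid (n : mdeg) : Cmor n n :=
  fun i => @InjMono (n i) (n i) (fun j => j) (fun _ _ h => h).

Lemma Ccomp_mono (n m p : mdeg) (f : Cmor n m) (g : Cmor m p) (i : 'I_k) :
  forall a b : 'I_(p i).+1, (a < b)%N -> (f i (g i a) < f i (g i b))%N.
Proof. by move=> a b hab; apply: im_mono; apply: im_mono. Qed.

Definition Ccomp (n m p : mdeg) (f : Cmor n m) (g : Cmor m p) : Cmor n p :=
  fun i => InjMono (@Ccomp_mono n m p f g i).

Definition Cpact (a : 'S_k) (n m : mdeg) (f : Cmor n m) :
  Cmor (pact a n) (pact a m) := fun i => f ((a^-1)%g i).

(* Objects of H ss_k : functors H ⋉ (Δ_inj^op)^k -> Set_*.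
   Presented by its total set E of simplices, graded by multidegree
   (E_n = {x | deg x = n}, based at bp n); the value of the functor on
   a morphism (a, f) is  act a \o face f  (with act a = (a,id)_* ).
   The fields below are exactly the functoriality / basedness laws;
   face f is only meaningful on E_n (f : Cmor n m) and act a only for
   a in H.                                                             *)
Record mss (H : {set 'S_k}) := MSS {
  ms_E :> Type ;
  ms_deg : ms_E -> mdeg ;
  ms_bp : mdeg -> ms_E ;
  ms_face : forall n m : mdeg, Cmor n m -> ms_E -> ms_E ;
  ms_act : 'S_k -> ms_E -> ms_E ;
  ms_bp_deg : forall n, ms_deg (ms_bp n) = n ;
  ms_face_deg : forall n m (f : Cmor n m) x,
      ms_deg x = n -> ms_deg (ms_face f x) = m ;
  ms_act_deg : forall a x, a \in H -> ms_deg (ms_act a x) = pact a (ms_deg x) ;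
  ms_face_id : forall n x, ms_deg x = n -> ms_face (Cid n) x = x ;
  ms_face_comp : forall n m p (f : Cmor n m) (g : Cmor m p) x,
      ms_deg x = n -> ms_face (Ccomp f g) x = ms_face g (ms_face f x) ;
  ms_act_one : forall x, ms_act 1%g x = x ;
  ms_act_mul : forall a b x, a \in H -> b \in H ->
      ms_act (pmul a b) x = ms_act a (ms_act b x) ;
  ms_act_face : forall a n m (f : Cmor n m) x, a \in H -> ms_deg x = n ->
      ms_act a (ms_face f x) = ms_face (Cpact a f) (ms_act a x) ;
  ms_face_bp : forall n m (f : Cmor n m), ms_face f (ms_bp n) = ms_bp m ;
  ms_act_bp : forall a n, a \in H -> ms_act a (ms_bp n) = ms_bp (pact a n)
}.

(* A natural transformation A => B restricted along K ⋉ C (K a group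
   acting on both): a morphism of K ss_k from A to B (B viewed in K ss_k
   by restriction, when B is in G ss_k with K ⊆ G).                    *)
Definition is_hom (K H1 H2 : {set 'S_k}) (A : mss H1) (B : mss H2)
    (phi : A -> B) : Prop :=
  [/\ forall x, ms_deg (phi x) = ms_deg x,
      forall n m (f : Cmor n m) x, ms_deg x = n ->
        phi (ms_face f x) = ms_face f (phi x),
      forall a x, a \in K -> phi (ms_act a x) = ms_act a (phi x)
    & forall n, phi (ms_bp A n) = ms_bp B n].

(* (B, eta) is a left Kan extension I_H^G A of A along
   H ⋉ (Δ_inj^op)^k -> G ⋉ (Δ_inj^op)^k, i.e. it is universal among
   morphisms from A to restrictions of objects of G ss_k.              *)
Definition is_lan (H G : {set 'S_k}) (A : mss H) (B : mss G) (eta : A -> B)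
  : Prop :=
  is_hom H eta /\
  forall (C : mss G) (psi : A -> C), is_hom H psi ->
    exists chi : B -> C,
      (is_hom G chi /\ forall x, chi (eta x) = psi x) /\
      forall chi' : B -> C, is_hom G chi' -> (forall x, chi' (eta x) = psi x) ->
        forall y, chi' y = chi y.

(* coordinates: u i j is the j-th barycentric coordinate of the i-th factor *)
Definition coord := 'I_k -> nat -> R.

Definition simp (n : mdeg) (u : coord) : Prop :=
  (forall i j, Rle 0 (u i j)) /\
  (forall i j, (n i < j)%N -> u i j = R0) /\
  (forall i, sum_f_R0 (u i) (n i) = R1).

(* the map Δ^m -> Δ^n induced by f : n -> m in (Δ_inj^op)^k *)
Definition cof (n m : mdeg) (f : Cmor n m) (u : coord) : coord :=
  fun i j => match [pick l : 'I_(m i).+1 | nat_of_ord (f i l) == j] with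
             | Some l => u i (nat_of_ord l)
             | None => R0
             end.

Definition deg0 : mdeg := fun _ => 0%N.
Definition vert0 : coord := fun _ j => if j == 0%N then R1 else R0.

Definition simp_open (n : mdeg) (W : coord -> Prop) : Prop :=
  forall u, simp n u -> W u ->
    exists eps, Rlt 0 eps /\
      forall v, simp n v ->
        (forall i j, (j <= n i)%N -> Rlt (Rabs (v i j - u i j)) eps) -> W v.

Section Realization.
Variables (H : {set 'S_k}) (A : mss H).

(* identifications: face relations, collapse of the basepoint simplices;
   pairs (x,u) with u not in Δ^{deg x} are not points of the
   realization and are (harmlessly) sent to the basepoint.             *)
Inductive realRel : A * coord -> A * coord -> Prop :=
| rr_face n m (f : Cmor n m) (x : A) u :
    ms_deg x = n -> simp m u -> realRel (ms_face f x, u) (x, cof f u)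
| rr_base n m u v :
    simp n u -> simp m v -> realRel (ms_bp A n, u) (ms_bp A m, v)
| rr_junk (x : A) u :
    ~ simp (ms_deg x) u -> realRel (x, u) (ms_bp A deg0, vert0).

Definition Real : Type := Quot realRel.
Definition rcls (x : A) (u : coord) : Real := cls realRel (x, u).
Definition realBase : Real := rcls (ms_bp A deg0) vert0.

Definition realOpen (V : Real -> Prop) : Prop :=
  forall x : A, simp_open (ms_deg x) (fun u => V (rcls x u)).

Definition pactU (a : 'S_k) (u : coord) : coord := fun i => u ((a^-1)%g i).

Definition realAct (a : 'S_k) (q : Real) : Real :=
  rcls (ms_act a (rep q).1) (pactU a (rep q).2).
End Realization.

Definition realMap (H1 H2 : {set 'S_k}) (A : mss H1) (B : mss H2)
    (phi : A -> B) (q : Real A) : Real B :=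
  rcls (A:=B) (phi (rep q).1) (rep q).2.

(* G_+ ∧_H |A| : (G x |A|) / ( (g h, z) ~ (g, h z), G x {*} ~ * )      *)
Section Smash.
Variables (G H : {set 'S_k}) (A : mss H).

(* pairs (g, z) with g outside G are not points and go to the basepoint *)
Inductive smashRel : 'S_k * Real A -> 'S_k * Real A -> Prop :=
| sm_H g h z : g \in G -> h \in H ->
    smashRel (pmul g h, z) (g, realAct h z)
| sm_base g g' : g \in G -> g' \in G ->
    smashRel (g, realBase A) (g', realBase A)
| sm_junk g z : g \notin G -> smashRel (g, z) (1%g, realBase A).

Definition Smash : Type := Quot smashRel.
Definition scls (g : 'S_k) (z : Real A) : Smash := cls smashRel (g, z).
Definition smashBase : Smash := scls 1%g (realBase A).

(* quotient topology of G x |A| with G discrete *)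
Definition smashOpen (V : Smash -> Prop) : Prop :=
  forall g, g \in G -> realOpen (fun z => V (scls g z)).

Definition smashAct (a : 'S_k) (s : Smash) : Smash :=
  scls (pmul a (rep s).1) (rep s).2.
End Smash.

Definition smashMap (G H : {set 'S_k}) (A A' : mss H) (phi : A -> A')
    (s : Smash G A) : Smash G A' :=
  scls G (A:=A') (rep s).1 (realMap phi (rep s).2).

Definition based_G_iso (G H : {set 'S_k}) (B : mss G) (A : mss H)
    (theta : Real B -> Smash G A) : Prop :=
  [/\ bijective theta,
      forall V, smashOpen V -> realOpen (fun q => V (theta q)),
      forall U, realOpen U -> smashOpen (fun s => exists q, U q /\ theta q = s),
      theta (realBase B) = smashBase G A
    & forall a q, a \in G -> theta (realAct a q) = smashAct a (theta q)].

End MultiSemiSimplicial.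

(* Main.v *)
Require Import Defs.
From Stdlib Require Import Reals Relations ClassicalEpsilon.
From mathcomp Require Import all_boot all_fingroup.
From Stdlib Require Import FunctionalExtensionality ProofIrrelevance PropExtensionality.

Set Implicit Arguments.
Unset Strict Implicit.
Unset Printing Implicit Defensive.

Section QuotLemmas.
Variables (T : Type) (R : T -> T -> Prop).

Lemma cls_eq t t' : eqv R t t' -> cls R t = cls R t'.
Proof.
move=> e; rewrite /cls; apply: subset_eq_compat.
apply: functional_extensionality => s; apply: propositional_extensionality.
split=> h.
- exact: rst_trans (rst_sym _ _ _ _ e) h.
- exact: rst_trans e h.
Qed.

Lemma rep_spec (q : Quot R) : proj1_sig q = eqv R (rep q).
Proof.
rewrite /rep.
exact: (proj2_sig (constructive_indefinite_description _ (proj2_sig q))).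
Qed.

Lemma cls_rep (q : Quot R) : cls R (rep q) = q.
Proof.
have E := rep_spec q.
move: E; case: q => C p /= E; rewrite /cls.
apply: subset_eq_compat; exact: (esym E).
Qed.

Lemma rep_cls t : eqv R (rep (cls R t)) t.
Proof.
have E : eqv R t = eqv R (rep (cls R t)) := rep_spec (cls R t).
apply: rst_sym; change (eqv R t (rep (cls R t))); rewrite E; exact: rst_refl.
Qed.

Lemma eqv_resp (X : Type) (F : T -> X) :
  (forall a b, R a b -> F a = F b) -> forall a b, eqv R a b -> F a = F b.
Proof.
move=> hF a b; elim.
- move=> x y h; exact: (hF x y h).
- by [].
- by move=> x y _ ->.
- by move=> x y z _ -> _ ->.
Qed.

Lemma resp_rep (X : Type) (F : T -> X) :
  (forall a b, R a b -> F a = F b) -> forall t, F (rep (cls R t)) = F t.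
Proof. move=> hF t; exact: eqv_resp hF _ _ (rep_cls t). Qed.

End QuotLemmas.

Section Gen.
Variable k : nat.
Implicit Types (a b g h : 'S_k) (n m : mdeg k).

Lemma pactM a b n : pact a (pact b n) = pact (pmul a b) n.
Proof. apply: functional_extensionality => i; by rewrite /pact /pmul invMg permM. Qed.
Lemma pact1 n : pact 1 n = n.
Proof. apply: functional_extensionality => i; by rewrite /pact invg1 perm1. Qed.
Lemma pactK a n : pact a^-1 (pact a n) = n.
Proof. by rewrite pactM /pmul mulgV pact1. Qed.
Lemma pactKV a n : pact a (pact a^-1 n) = n.
Proof. by rewrite pactM /pmul mulVg pact1. Qed.

Lemma pactUM a b (u : coord k) : pactU a (pactU b u) = pactU (pmul a b) u.
Proof. apply: functional_extensionality => i; by rewrite /pactU /pmul invMg permM. Qed.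
Lemma pactU1 (u : coord k) : pactU 1 u = u.
Proof. apply: functional_extensionality => i; by rewrite /pactU invg1 perm1. Qed.
Lemma pactUK a (u : coord k) : pactU a^-1 (pactU a u) = u.
Proof. by rewrite pactUM /pmul mulgV pactU1. Qed.
Lemma pactUKV a (u : coord k) : pactU a (pactU a^-1 u) = u.
Proof. by rewrite pactUM /pmul mulVg pactU1. Qed.

Lemma simp_pactU a n u : simp n u -> simp (pact a n) (pactU a u).
Proof.
case=> [h1 [h2 h3]]; split; [|split] => i.
- move=> j; exact: h1.
- move=> j; exact: h2.
- exact: h3.
Qed.

Lemma simp_pactU_inv a n u : simp (pact a n) (pactU a u) -> simp n u.
Proof. move/(simp_pactU a^-1); by rewrite pactK pactUK. Qed.

Lemma pactU_cof a n m (f : Cmor n m) u :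
  pactU a (cof f u) = cof (Cpact a f) (pactU a u).
Proof. by []. Qed.

Lemma Cmor_idx n m (f : Cmor n m) i j (e : i = j)
    (l : 'I_(m i).+1) (l' : 'I_(m j).+1) :
  (l : nat) = l' -> (f i l : nat) = f j l'.
Proof. subst j => h. by have -> : l = l' by apply: val_inj. Qed.

Lemma face_same (K : {set 'S_k}) (A : mss K) n m n' m' (f : Cmor n m) (f' : Cmor n' m') (x : A) :
  n = n' -> m = m' ->
  (forall i (l : 'I_(m i).+1) (l' : 'I_(m' i).+1),
      (l : nat) = l' -> (f i l : nat) = f' i l') ->
  ms_face f x = ms_face f' x.
Proof.
move=> en em; subst n' m' => hf.
have -> : f = f'; last by [].
apply: functional_extensionality_dep => i.
move: (hf i); case: (f i) => F1 p1; case: (f' i) => F2 p2 /= h.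
have eF : F1 = F2.
  apply: functional_extensionality => l; apply: val_inj; exact: h.
subst F2; congr InjMono; exact: proof_irrelevance.
Qed.

Lemma Cpact_KV_face (K : {set 'S_k}) (A : mss K) g n m (f : Cmor n m) (x : A) :
  ms_face (Cpact g (Cpact g^-1 f)) x = ms_face f x.
Proof.
apply: face_same; [exact: pactKV | exact: pactKV |].
move=> i l l' e.
have ei : ((g^-1)^-1)%g (((g^-1)%g) i) = i by rewrite invgK permKV.
exact: (Cmor_idx f ei e).
Qed.

Lemma vert0_simp : simp (@deg0 k) (@vert0 k).
Proof.
split; [|split].
- move=> i j; rewrite /vert0; case: (j == 0)%N; [exact: Rle_0_1 | exact: Rle_refl].
- move=> i j; rewrite /deg0 /vert0; by case: j.
- move=> i; by rewrite /= /vert0.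
Qed.

Section RealGen.
Variables (K : {set 'S_k}) (A : mss K).

Lemma rcls_face n m (f : Cmor n m) (x : A) u :
  ms_deg x = n -> simp m u -> rcls (ms_face f x) u = rcls x (cof f u).
Proof. move=> hx hu; apply: cls_eq; apply: rst_step; exact: rr_face. Qed.

Lemma rcls_junk (x : A) u : ~ simp (ms_deg x) u -> rcls x u = realBase A.
Proof. move=> hu; apply: cls_eq; apply: rst_step; exact: rr_junk. Qed.

Lemma rcls_bp n u : rcls (ms_bp A n) u = realBase A.
Proof.
case: (classic (simp n u)) => hu.
- apply: cls_eq; apply: rst_step; exact: rr_base hu vert0_simp.
- apply: rcls_junk; by rewrite ms_bp_deg.
Qed.

Lemma rcls_rep (q : Real A) : rcls (rep q).1 (rep q).2 = q.
Proof. rewrite /rcls -surjective_pairing; exact: cls_rep. Qed.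

Lemma realAct_rcls a : a \in K -> forall (x : A) u,
  realAct a (rcls x u) = rcls (ms_act a x) (pactU a u).
Proof.
move=> ha x u; rewrite /realAct /rcls.
apply: (resp_rep (F := fun t => cls (realRel (A:=A)) (ms_act a t.1, pactU a t.2))).
move=> t t'; case=> [n m f y w hy hw | n m w v hw hv | y w hw] /=.
- rewrite ms_act_face // pactU_cof.
  apply: (rcls_face (n := pact a n)); first by rewrite ms_act_deg // hy.
  exact: simp_pactU.
- change (rcls (ms_act a (ms_bp A n)) (pactU a w) =
     rcls (ms_act a (ms_bp A m)) (pactU a v)).
  by rewrite !ms_act_bp // !rcls_bp.
- have hj : ~ simp (ms_deg (ms_act a y)) (pactU a w).
    by rewrite ms_act_deg // => /simp_pactU_inv.
  change (rcls (ms_act a y) (pactU a w) =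
     rcls (ms_act a (ms_bp A (deg0 (k:=k)))) (pactU a (vert0 (k:=k)))).
  by rewrite (rcls_junk hj) ms_act_bp // rcls_bp.
Qed.

End RealGen.

Lemma realMap_rcls (K1 K2 K : {set 'S_k}) (A : mss K1) (B : mss K2) (phi : A -> B) :
  is_hom K phi -> forall x u, realMap phi (rcls x u) = rcls (phi x) u.
Proof.
case=> hd hf ha hb x u; rewrite /realMap /rcls.
apply: (resp_rep (F := fun t => cls (realRel (A:=B)) (phi t.1, t.2))).
move=> t t'; case=> [n m f y w hy hw | n m w v hw hv | y w hw] /=.
- rewrite hf //; apply: rcls_face => //; by rewrite hd.
- change (rcls (phi (ms_bp A n)) w = rcls (phi (ms_bp A m)) v).
  by rewrite !hb !rcls_bp.
- have hj : ~ simp (ms_deg (phi y)) w by rewrite hd.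
  change (rcls (phi y) w = rcls (phi (ms_bp A (deg0 (k:=k)))) (vert0 (k:=k))).
  by rewrite (rcls_junk hj) hb rcls_bp.
Qed.

Lemma simp_open_pact a d d' (W W' : coord k -> Prop) :
  d' = pact a d -> (forall u, W' u <-> W (pactU a^-1 u)) ->
  simp_open d W -> simp_open d' W'.
Proof.
move=> -> eW hW u hu /eW Wu.
have hv : forall v, simp (pact a d) v -> simp d (pactU a^-1 v).
  move=> v hv; rewrite -(pactK a d); exact: simp_pactU.
have [eps [heps H']] := hW _ (hv _ hu) Wu.
exists eps; split=> // v hv' close; apply/eW; apply: H'; first exact: hv.
move=> i j hj; apply: close; by rewrite /pact permKV.
Qed.

End Gen.

Section Gen2.
Variable k : nat.
Implicit Types (a b g h : 'S_k) (n m : mdeg k).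

Lemma pmulA a b c : pmul a (pmul b c) = pmul (pmul a b) c.
Proof. by rewrite /pmul mulgA. Qed.
Lemma pmulV a b : ((pmul a b)^-1)%g = pmul (b^-1)%g (a^-1)%g.
Proof. by rewrite /pmul invMg. Qed.
Lemma pmul1g a : pmul 1 a = a.
Proof. by rewrite /pmul mulg1. Qed.
Lemma pmulg1 a : pmul a 1 = a.
Proof. by rewrite /pmul mul1g. Qed.
Lemma pmulVg a : pmul (a^-1)%g a = 1%g.
Proof. by rewrite /pmul mulgV. Qed.
Lemma pmulgV a : pmul a (a^-1)%g = 1%g.
Proof. by rewrite /pmul mulVg. Qed.
Lemma pmulE a b i : pmul a b i = a (b i).
Proof. by rewrite /pmul permM. Qed.

Lemma Cpact_M_face (K : {set 'S_k}) (A : mss K) a b n m (f : Cmor n m) (x : A) :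
  ms_face (Cpact a (Cpact b f)) x = ms_face (Cpact (pmul a b) f) x.
Proof.
apply: face_same; [exact: pactM | exact: pactM |].
move=> i l l' e.
have ei : (b^-1)%g ((a^-1)%g i) = ((pmul a b)^-1)%g i by rewrite pmulV pmulE.
exact: (Cmor_idx f ei e).
Qed.

Lemma Cpact_1_face (K : {set 'S_k}) (A : mss K) n m (f : Cmor n m) (x : A) :
  ms_face (Cpact 1 f) x = ms_face f x.
Proof.
apply: face_same; [exact: pact1 | exact: pact1 |].
move=> i l l' e.
have ei : ((1 : 'S_k)^-1)%g i = i by rewrite invg1 perm1.
exact: (Cmor_idx f ei e).
Qed.

End Gen2.

Section LanS.
Variables (k : nat) (H G : {group 'S_k}) (hHG : H \subset G).
Variables (A : mss H) (B : mss G) (eta : A -> B) (L : is_lan eta).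

Let hetaH : is_hom H eta := L.1.
Lemma eta_deg x : ms_deg (eta x) = ms_deg x. Proof. by case: hetaH. Qed.
Lemma eta_face n m (f : Cmor n m) x : ms_deg x = n -> eta (ms_face f x) = ms_face f (eta x).
Proof. by case: hetaH => _ hf _ _; apply: hf. Qed.
Lemma eta_act a x : a \in H -> eta (ms_act a x) = ms_act a (eta x).
Proof. by case: hetaH => _ _ ha _; apply: ha. Qed.
Lemma eta_bp n : eta (ms_bp A n) = ms_bp B n.
Proof. by case: hetaH. Qed.

Lemma HG h : h \in H -> h \in G. Proof. exact: (subsetP hHG). Qed.

Lemma face_act_eta g n m (f : Cmor n m) (x : A) : g \in G ->
  ms_deg x = pact (g^-1)%g n ->
  ms_face f (ms_act g (eta x)) = ms_act g (eta (ms_face (Cpact (g^-1)%g f) x)).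
Proof.
move=> hg hx; rewrite eta_face //.
rewrite ms_act_face //; last by rewrite eta_deg.
by rewrite Cpact_KV_face.
Qed.

Definition Sdef (y : B) : Prop :=
  exists p : 'S_k * A, p.1 \in G /\ y = ms_act p.1 (eta p.2).

Lemma S_act a y : a \in G -> Sdef y -> Sdef (ms_act a y).
Proof.
move=> ha [[g x] /= [hg ->]]; exists (pmul a g, x); split => /=.
- by rewrite /pmul groupM.
- by rewrite ms_act_mul.
Qed.

Lemma deg_act_eta g (x : A) : g \in G -> ms_deg (ms_act g (eta x)) = pact g (ms_deg x).
Proof. by move=> hg; rewrite ms_act_deg // eta_deg. Qed.

Lemma S_face n m (f : Cmor n m) y : ms_deg y = n -> Sdef y -> Sdef (ms_face f y).
Proof.
move=> hy [[g x] /= [hg ey]]; subst y.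
exists (g, ms_face (Cpact (g^-1)%g f) x); split => //=.
apply: face_act_eta => //.
by rewrite -hy deg_act_eta // pactK.
Qed.

Lemma S_eta x : Sdef (eta x).
Proof. exists (1%g, x); split => /=; [exact: group1 | by rewrite ms_act_one]. Qed.

Lemma S_bp n : Sdef (ms_bp B n).
Proof. rewrite -eta_bp; exact: S_eta. Qed.

Definition sb (y : B) : bool :=
  if excluded_middle_informative (Sdef y) then true else false.
Lemma sbP y : reflect (Sdef y) (sb y).
Proof. rewrite /sb; case: excluded_middle_informative => h; by constructor. Qed.

Definition CSE := {p : B * bool | p.2 ==> ~~ sb p.1}.
Lemma mk_proof (y : B) (b : bool) : (y, b && ~~ sb y).2 ==> ~~ sb (y, b && ~~ sb y).1.
Proof. by case: b; case: (sb y). Qed.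
Definition mk (y : B) (b : bool) : CSE := exist _ (y, b && ~~ sb y) (mk_proof y b).

Lemma mk_eq y y' b b' : y = y' -> (b && ~~ sb y) = (b' && ~~ sb y') -> mk y b = mk y' b'.
Proof. move=> ey eb; rewrite /mk; apply: subset_eq_compat; by rewrite eb ey. Qed.

Lemma mk_val (p : CSE) : mk (proj1_sig p).1 (proj1_sig p).2 = p.
Proof.
case: p => [[y b] /= hp]; rewrite /mk; apply: subset_eq_compat => /=.
by move: hp; case: b => //= ->.
Qed.

Definition cs_deg (p : CSE) := ms_deg (proj1_sig p).1.
Definition cs_bp n := mk (ms_bp B n) false.
Definition cs_face n m (f : Cmor n m) (p : CSE) := mk (ms_face f (proj1_sig p).1) (proj1_sig p).2.
Definition cs_act a (p : CSE) := mk (ms_act a (proj1_sig p).1) (proj1_sig p).2.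

Lemma cs_bp_deg n : cs_deg (cs_bp n) = n.
Proof. exact: ms_bp_deg. Qed.
Lemma cs_face_deg n m (f : Cmor n m) x : cs_deg x = n -> cs_deg (cs_face f x) = m.
Proof. exact: ms_face_deg. Qed.
Lemma cs_act_deg a x : a \in (G : {set 'S_k}) -> cs_deg (cs_act a x) = pact a (cs_deg x).
Proof. exact: ms_act_deg. Qed.
Lemma cs_face_id n x : cs_deg x = n -> cs_face (Cid n) x = x.
Proof. move=> h; rewrite /cs_face ms_face_id //; exact: mk_val. Qed.

Lemma sb_face n m (f : Cmor n m) y : ms_deg y = n -> sb y -> sb (ms_face f y).
Proof. move=> hy /sbP h; apply/sbP; exact: S_face h. Qed.
Lemma sb_act a y : a \in G -> sb y -> sb (ms_act a y).
Proof. move=> ha /sbP h; apply/sbP; exact: S_act h. Qed.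

Lemma cs_face_comp n m p (f : Cmor n m) (g : Cmor m p) x : cs_deg x = n ->
  cs_face (Ccomp f g) x = cs_face g (cs_face f x).
Proof.
case: x => [[y b] /= hp] hy; rewrite /cs_face /=.
apply: mk_eq; first exact: ms_face_comp.
rewrite ms_face_comp //.
case e: (sb (ms_face f y)); last by rewrite andbT.
have := sb_face g (ms_face_deg f hy) e; rewrite /= => ->.
by rewrite !andbF.
Qed.

Lemma cs_act_one x : cs_act 1 x = x.
Proof. by rewrite /cs_act ms_act_one mk_val. Qed.

Lemma cs_act_mul a b x : a \in (G : {set 'S_k}) -> b \in (G : {set 'S_k}) ->
  cs_act (pmul a b) x = cs_act a (cs_act b x).
Proof.
case: x => [[y c] /= hp] ha hb; rewrite /cs_act /=.
apply: mk_eq; first exact: ms_act_mul.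
rewrite ms_act_mul //.
case e: (sb (ms_act b y)); last by rewrite andbT.
by rewrite (sb_act ha e) !andbF.
Qed.

Lemma cs_act_face a n m (f : Cmor n m) x : a \in (G : {set 'S_k}) -> cs_deg x = n ->
  cs_act a (cs_face f x) = cs_face (Cpact a f) (cs_act a x).
Proof.
case: x => [[y c] /= hp] ha; rewrite /cs_deg /= => hy; rewrite /cs_act /cs_face /=.
have E := ms_act_face f ha hy.
have hd : ms_deg (ms_act a y) = pact a n by rewrite ms_act_deg // hy.
apply: mk_eq => //; rewrite E.
case e1: (sb (ms_face f y)).
- have := sb_act ha e1; rewrite E => ->; by rewrite !andbF.
- case e2: (sb (ms_act a y)); last by rewrite !andbT.
  have := sb_face (Cpact a f) hd e2; rewrite -/(is_true _) => ->.
  by rewrite !andbF.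
Qed.

Lemma cs_face_bp n m (f : Cmor n m) : cs_face f (cs_bp n) = cs_bp m.
Proof. by rewrite /cs_face /cs_bp /= ms_face_bp. Qed.
Lemma cs_act_bp a n : a \in (G : {set 'S_k}) -> cs_act a (cs_bp n) = cs_bp (pact a n).
Proof. by move=> ha; rewrite /cs_act /cs_bp /= ms_act_bp. Qed.

Definition CS : mss G :=
  @MSS k G CSE cs_deg cs_bp cs_face cs_act cs_bp_deg cs_face_deg cs_act_deg
    cs_face_id cs_face_comp cs_act_one cs_act_mul cs_act_face cs_face_bp cs_act_bp.

Lemma lan_surj y : Sdef y.
Proof.
pose chi1 (y : B) : CS := mk y false.
pose chi2 (y : B) : CS := mk y true.
have h1 : is_hom G chi1 by split.
have h2 : is_hom G chi2.
  split => //.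
  - move=> n m f x hx; apply: mk_eq => //=.
    case e: (sb x) => /=; last by [].
    by rewrite (sb_face f hx e).
  - move=> a x ha; apply: mk_eq => //=.
    case e: (sb x) => /=; last by [].
    by rewrite (sb_act ha e).
  - move=> n; apply: mk_eq => //=.
    by have /sbP -> := S_bp n.
have hpsi : is_hom H (fun x => chi1 (eta x)).
  split.
  - move=> x; exact: eta_deg.
  - move=> n m f x hx; rewrite /chi1 eta_face //.
  - move=> a x ha; rewrite /chi1 eta_act //.
  - move=> n; by rewrite /chi1 eta_bp.
have [chi [[hchi _] U]] := L.2 CS _ hpsi.
have e1 := U chi1 h1 (fun _ => erefl) y.
have e2 : chi2 y = chi y.
  apply: (U chi2 h2) => x; apply: mk_eq => //=.
  by have /sbP -> := S_eta x.
have := f_equal (fun p : CSE => (proj1_sig p).2) (etrans e1 (esym e2)).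
rewrite /= => /esym /negbFE /sbP; exact.
Qed.

End LanS.

Section LanK.
Variables (k : nat) (H G : {group 'S_k}).
Variables (A : mss H) (B : mss G) (eta : A -> B) (L : is_lan eta).

Definition cvalid (F : 'S_k -> A) : Prop :=
  (forall g h, h \in H -> F (pmul g h) = ms_act (h^-1)%g (F g)) /\
  (forall g, ms_deg (F g) = pact (g^-1)%g (ms_deg (F 1%g))).

Definition CE := {F : 'S_k -> A | cvalid F}.

Lemma CE_eq (F1 F2 : CE) : proj1_sig F1 = proj1_sig F2 -> F1 = F2.
Proof. case: F1 F2 => [f1 p1] [f2 p2] /= e; exact: subset_eq_compat. Qed.

Lemma pact_pmulV (g h : 'S_k) (n : mdeg k) : pact ((pmul g h)^-1)%g n = pact (h^-1)%g (pact (g^-1)%g n).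
Proof. by rewrite pactM pmulV. Qed.

Definition cdeg (F : CE) := ms_deg (proj1_sig F 1%g).

Lemma cbp_valid n : cvalid (fun g => ms_bp A (pact (g^-1)%g n)).
Proof.
split.
- move=> g h hh; by rewrite ms_act_bp ?groupV // pact_pmulV.
- move=> g; by rewrite !ms_bp_deg invg1 pact1.
Qed.
Definition cbp n : CE := exist _ _ (cbp_valid n).

Lemma cact_valid a (F : CE) : cvalid (fun g => proj1_sig F (pmul (a^-1)%g g)).
Proof.
case: F => F p; have [v1 v2] := p; split => /=.
- move=> g h hh; by rewrite pmulA v1.
- move=> g; rewrite v2 (v2 (pmul _ _)) pactM.
  by rewrite !pmulV !invgK invg1 pmul1g.
Qed.
Definition cact a (F : CE) : CE := exist _ _ (cact_valid a F).

Lemma cface_valid n m (f : Cmor n m) (F : CE) : cdeg F = n ->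
  cvalid (fun g => ms_face (Cpact (g^-1)%g f) (proj1_sig F g)).
Proof.
case: F => F p; have [v1 v2] := p; rewrite /cdeg /= => hF.
have hd g : ms_deg (F g) = pact (g^-1)%g n by rewrite v2 hF.
split.
- move=> g h hh; rewrite v1 // ms_act_face ?groupV //.
  by rewrite Cpact_M_face pmulV.
- move=> g; rewrite !(ms_face_deg _ (hd _)); by rewrite invg1 pact1.
Qed.

Definition cface n m (f : Cmor n m) (F : CE) : CE :=
  match excluded_middle_informative (cdeg F = n) with
  | left e => exist _ _ (cface_valid f e)
  | right _ => cbp m
  end.

Lemma cface_val n m (f : Cmor n m) (F : CE) : cdeg F = n ->
  proj1_sig (cface f F) = fun g => ms_face (Cpact (g^-1)%g f) (proj1_sig F g).
Proof. rewrite /cface => e; by case: excluded_middle_informative. Qed.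

Lemma CE_deg (F : CE) g : ms_deg (proj1_sig F g) = pact (g^-1)%g (cdeg F).
Proof. case: F => F p; have [v1 v2] := p; exact: v2. Qed.

Lemma c_bp_deg n : cdeg (cbp n) = n.
Proof. by rewrite /cdeg /= ms_bp_deg invg1 pact1. Qed.
Lemma c_face_deg n m (f : Cmor n m) x : cdeg x = n -> cdeg (cface f x) = m.
Proof.
move=> e; rewrite /cdeg cface_val //=.
have hd : ms_deg (proj1_sig x 1%g) = pact (1^-1)%g n by rewrite CE_deg e.
by rewrite (ms_face_deg _ hd) invg1 pact1.
Qed.
Lemma c_act_deg a x : a \in (G : {set 'S_k}) -> cdeg (cact a x) = pact a (cdeg x).
Proof. move=> _; by rewrite /cdeg /= CE_deg pmulg1 invgK. Qed.
Lemma c_face_id n x : cdeg x = n -> cface (Cid n) x = x.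
Proof.
move=> e; apply: CE_eq; rewrite cface_val //.
apply: functional_extensionality => g.
rewrite (face_same (f' := Cid (pact (g^-1)%g n))) //.
by rewrite ms_face_id // CE_deg e.
Qed.
Lemma c_face_comp n m p (f : Cmor n m) (g : Cmor m p) x : cdeg x = n ->
  cface (Ccomp f g) x = cface g (cface f x).
Proof.
move=> e; apply: CE_eq; rewrite cface_val // cface_val; last exact: c_face_deg e.
rewrite cface_val //; apply: functional_extensionality => c.
rewrite -ms_face_comp; last by rewrite CE_deg e.
apply: face_same => // i l l' el /=.
by have -> : l = l' :> 'I__ by apply: val_inj.
Qed.
Lemma c_act_one x : cact 1 x = x.
Proof.
apply: CE_eq => /=; apply: functional_extensionality => g; by rewrite invg1 pmul1g.
Qed.
Lemma c_act_mul a b x : a \in (G : {set 'S_k}) -> b \in (G : {set 'S_k}) ->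
  cact (pmul a b) x = cact a (cact b x).
Proof.
move=> _ _; apply: CE_eq => /=; apply: functional_extensionality => g.
by rewrite pmulV pmulA.
Qed.
Lemma c_act_face a n m (f : Cmor n m) x : a \in (G : {set 'S_k}) -> cdeg x = n ->
  cact a (cface f x) = cface (Cpact a f) (cact a x).
Proof.
move=> ha e; apply: CE_eq.
rewrite cface_val; last by rewrite c_act_deg // e.
rewrite /= cface_val //; apply: functional_extensionality => g.
by rewrite Cpact_M_face pmulV invgK.
Qed.
Lemma c_face_bp n m (f : Cmor n m) : cface f (cbp n) = cbp m.
Proof.
apply: CE_eq; rewrite cface_val ?c_bp_deg //=.
apply: functional_extensionality => g; exact: ms_face_bp.
Qed.
Lemma c_act_bp a n : a \in (G : {set 'S_k}) -> cact a (cbp n) = cbp (pact a n).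
Proof.
move=> _; apply: CE_eq => /=; apply: functional_extensionality => g.
by rewrite pactM pmulV invgK.
Qed.

Definition CC : mss G :=
  @MSS k G CE cdeg cbp cface cact c_bp_deg c_face_deg c_act_deg
    c_face_id c_face_comp c_act_one c_act_mul c_act_face c_face_bp c_act_bp.

Definition psif (x : A) (g : 'S_k) : A :=
  if g \in H then ms_act (g^-1)%g x else ms_bp A (pact (g^-1)%g (ms_deg x)).

Lemma psif_valid x : cvalid (psif x).
Proof.
rewrite /psif; split.
- move=> g h hh; rewrite /pmul groupMl //.
  case: (g \in H) / boolP => hg.
  + by rewrite -ms_act_mul ?groupV // pmulV.
  + by rewrite ms_act_bp ?groupV // pact_pmulV.
- move=> g; rewrite group1 invg1 ms_act_one.
  case: (g \in H) / boolP => hg.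
  + by rewrite ms_act_deg // groupV.
  + by rewrite ms_bp_deg.
Qed.
Definition psiC (x : A) : CE := exist _ _ (psif_valid x).

Lemma psiC1 x : proj1_sig (psiC x) 1%g = x.
Proof. by rewrite /= /psif group1 invg1 ms_act_one. Qed.

Lemma psiC_hom : is_hom H (psiC : A -> CC).
Proof.
split.
- move=> x; by rewrite /= /cdeg psiC1.
- move=> n m f x hx; apply: CE_eq.
  rewrite /= cface_val; last by rewrite /cdeg psiC1.
  apply: functional_extensionality => g; rewrite /= /psif.
  case: (g \in H) / boolP => hg.
  + by rewrite ms_act_face ?groupV.
  + by rewrite (ms_face_deg _ hx) hx ms_face_bp.
- move=> a x ha; apply: CE_eq; apply: functional_extensionality => g.
  rewrite /= /psif /pmul groupMr ?groupV //.
  case: (g \in H) / boolP => hg.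
  + by rewrite -ms_act_mul ?groupV // -/(pmul _ _) pmulV invgK.
  + by rewrite ms_act_deg // pactM -/(pmul _ _) pmulV invgK.
- move=> n; apply: CE_eq; apply: functional_extensionality => g.
  rewrite /= /psif ms_bp_deg.
  case: (g \in H) / boolP => hg //.
  by rewrite ms_act_bp // groupV.
Qed.

Lemma lan_inj g1 x1 g x : g1 \in G -> g \in G ->
  ms_act g1 (eta x1) = ms_act g (eta x) ->
  (exists2 h, h \in H & g1 = pmul g h /\ x1 = ms_act (h^-1)%g x) \/
  (exists n1 n2, x1 = ms_bp A n1 /\ x = ms_bp A n2).
Proof.
move=> hg1 hg e.
have [chi [[[_ _ hca _] ceta] _]] := L.2 CC _ psiC_hom.
have E : cact g1 (psiC x1) = cact g (psiC x).
  have E0 : ms_act g1 (chi (eta x1)) = ms_act g (chi (eta x)) by rewrite -!hca // e.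
  by rewrite !ceta in E0.
have E1 := f_equal (fun F : CE => proj1_sig F g1) E.
have E2 := f_equal (fun F : CE => proj1_sig F g) E.
rewrite /= pmulVg -[psif x1 1%g]/(proj1_sig (psiC x1) 1%g) psiC1 in E1.
rewrite /= pmulVg -[psif x 1%g]/(proj1_sig (psiC x) 1%g) psiC1 in E2.
rewrite /psif in E1 E2.
case: (pmul (g^-1)%g g1 \in H) / boolP => hh.
- left; exists (pmul (g^-1)%g g1) => //; split.
  + by rewrite pmulA pmulgV pmul1g.
  + by rewrite E1 hh.
- right.
  have hh' : pmul (g1^-1)%g g \notin H.
    by rewrite -groupV pmulV invgK.
  rewrite (negbTE hh) in E1; rewrite (negbTE hh') in E2.
  by exists (pact ((pmul (g^-1)%g g1)^-1)%g (ms_deg x)),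
    (pact ((pmul (g1^-1)%g g)^-1)%g (ms_deg x1)).
Qed.

End LanK.

Section SmashGen.
Variables (k : nat) (H G : {group 'S_k}).

Lemma scls_base (A : mss H) g : g \in G -> scls G g (realBase A) = smashBase G A.
Proof. move=> hg; apply: cls_eq; apply: rst_step; exact: sm_base hg (group1 G). Qed.

Lemma scls_H (A : mss H) g h (z : Real A) : g \in G -> h \in H ->
  scls G (pmul g h) z = scls G g (realAct h z).
Proof. move=> hg hh; apply: cls_eq; apply: rst_step; exact: sm_H. Qed.

Lemma scls_junk (A : mss H) g (z : Real A) : g \notin G -> scls G g z = smashBase G A.
Proof. move=> hg; apply: cls_eq; apply: rst_step; exact: sm_junk. Qed.

Lemma scls_rep (A : mss H) (s : Smash G A) : scls G (rep s).1 (rep s).2 = s.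
Proof. rewrite /scls -surjective_pairing; exact: cls_rep. Qed.

Lemma smashAct_scls (A : mss H) a g (z : Real A) : a \in G ->
  smashAct a (scls G g z) = scls G (pmul a g) z.
Proof.
move=> ha; rewrite /smashAct.
apply: (resp_rep (F := fun p => scls G (pmul a p.1) p.2)).
move=> p p'; case=> [g1 h z1 hg hh | g1 g2 hg1 hg2 | g1 z1 hg] /=.
- rewrite pmulA scls_H //; by rewrite /pmul groupM.
- rewrite !scls_base // /pmul groupM //.
- rewrite scls_junk; last by rewrite /pmul groupMr.
  by rewrite pmulg1 scls_base.
Qed.

Lemma smashMap_scls (A A' : mss H) (phi : A -> A') : is_hom H phi ->
  forall g (z : Real A), smashMap phi (scls G g z) = scls G g (realMap phi z).
Proof.
move=> hphi g z; rewrite /smashMap.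
have hb : realMap phi (realBase A) = realBase A'.
  rewrite /realBase (realMap_rcls hphi); case: hphi => _ _ _ ->; exact: rcls_bp.
apply: (resp_rep (F := fun p => scls G p.1 (realMap phi p.2))).
move=> p p'; case=> [g1 h z1 hg hh | g1 g2 hg1 hg2 | g1 z1 hg] /=.
- rewrite scls_H //; congr scls.
  rewrite -(rcls_rep z1) realAct_rcls // !(realMap_rcls hphi) realAct_rcls //.
  case: hphi => _ _ hact _; by rewrite hact.
- by rewrite hb !scls_base.
- by rewrite scls_junk // hb scls_base.
Qed.

End SmashGen.

Section Theta.
Variables (k : nat) (H G : {group 'S_k}) (hHG : H \subset G).
Variables (A : mss H) (B : mss G) (eta : A -> B) (L : is_lan eta).

Lemma dec_exists (y : B) : exists g x, g \in G /\ y = ms_act g (eta x).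
Proof. have [[g x] [hg e]] := lan_surj L y; by exists g, x. Qed.

Definition dec (y : B) : 'S_k * A :=
  proj1_sig (constructive_indefinite_description _ (lan_surj L y)).
Lemma dec_spec y : (dec y).1 \in G /\ y = ms_act (dec y).1 (eta (dec y).2).
Proof. rewrite /dec; case: constructive_indefinite_description => p /= h; exact: h. Qed.

Definition theta0 (t : B * coord k) : Smash G A :=
  scls G (dec t.1).1 (rcls (dec t.1).2 (pactU ((dec t.1).1^-1)%g t.2)).

Lemma theta0T g x u : g \in G ->
  theta0 (ms_act g (eta x), u) = scls G g (rcls x (pactU (g^-1)%g u)).
Proof.
move=> hg; rewrite /theta0 /=.
have := dec_spec (ms_act g (eta x)).
case: (dec _) => g1 x1 /= [hg1 e].
case: (lan_inj L hg1 hg (esym e)) => [[h hh [-> ->]] | [n1 [n2 [-> ->]]]].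
- rewrite scls_H // realAct_rcls //.
  rewrite -ms_act_mul ?groupV // pmulgV ms_act_one pactUM pmulV pmulA pmulgV pmul1g.
  by [].
- by rewrite !rcls_bp !scls_base.
Qed.

Lemma theta0_bp n u : theta0 (ms_bp B n, u) = smashBase G A.
Proof.
rewrite -(eta_bp L) -[eta _]ms_act_one theta0T ?group1 //.
by rewrite rcls_bp scls_base ?group1.
Qed.

Lemma theta0_resp t t' : realRel t t' -> theta0 t = theta0 t'.
Proof.
case=> [n m f y u hy hu | n m u v hu hv | y u hu].
- have [g [x [hg ey]]] := dec_exists y; subst y.
  have hx : ms_deg x = pact (g^-1)%g n by rewrite -hy (deg_act_eta L) // pactK.
  rewrite (face_act_eta L) // !theta0T // pactU_cof rcls_face //.
  exact: simp_pactU.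
- by rewrite !theta0_bp.
- have [g [x [hg ey]]] := dec_exists y; subst y.
  rewrite theta0_bp theta0T // rcls_junk ?scls_base //.
  move=> hs; apply: hu; rewrite (deg_act_eta L) //.
  rewrite -(pactUKV g u); exact: simp_pactU.
Qed.

Definition theta (q : Real B) : Smash G A := theta0 (rep q).

Lemma theta_rcls y u : theta (rcls y u) = theta0 (y, u).
Proof. exact: (resp_rep theta0_resp). Qed.

Lemma thetaT g x u : g \in G ->
  theta (rcls (ms_act g (eta x)) u) = scls G g (rcls x (pactU (g^-1)%g u)).
Proof. move=> hg; by rewrite theta_rcls theta0T. Qed.

Lemma theta_base : theta (realBase B) = smashBase G A.
Proof. by rewrite /realBase theta_rcls theta0_bp. Qed.

Definition psi0 (p : 'S_k * Real A) : Real B :=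
  if p.1 \in G then realAct p.1 (realMap eta p.2) else realBase B.

Lemma psiA_rcls g x u : g \in G ->
  realAct g (realMap eta (rcls x u)) = rcls (ms_act g (eta x)) (pactU g u).
Proof. move=> hg; by rewrite (realMap_rcls L.1) realAct_rcls. Qed.

Lemma psiA_base g : g \in G -> realAct g (realMap eta (realBase A)) = realBase B.
Proof. move=> hg; by rewrite /realBase psiA_rcls // (eta_bp L) ms_act_bp // rcls_bp. Qed.

Lemma psi0_resp p p' : smashRel G p p' -> psi0 p = psi0 p'.
Proof.
rewrite /psi0; case=> [g h z hg hh | g g' hg hg' | g z hg] /=.
- have hh' : h \in G by exact: (subsetP hHG).
  rewrite hg /pmul groupM // -/(pmul g h).
  rewrite -(rcls_rep z) realAct_rcls // !psiA_rcls //; last by rewrite /pmul groupM.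
  by rewrite (eta_act L) // ms_act_mul // pactUM.
- by rewrite hg hg' !psiA_base.
- by rewrite (negbTE hg) group1 psiA_base ?group1.
Qed.

Definition psi (s : Smash G A) : Real B := psi0 (rep s).

Lemma psi_scls g z : psi (scls G g z) = psi0 (g, z).
Proof. exact: (resp_rep psi0_resp). Qed.

Lemma theta_psi s : theta (psi s) = s.
Proof.
rewrite -(scls_rep s); move: (rep s) => [g z] /=.
rewrite psi_scls /psi0 /=.
case: (g \in G) / boolP => hg.
- rewrite -(rcls_rep z) psiA_rcls // thetaT //; by rewrite pactUK.
- by rewrite theta_base scls_junk.
Qed.

Lemma psi_theta q : psi (theta q) = q.
Proof.
rewrite -(rcls_rep q); move: (rep q) => [y u] /=.
have [g [x [hg ->]]] := dec_exists y.
by rewrite thetaT // psi_scls /psi0 /= hg psiA_rcls // pactUKV.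
Qed.

Lemma theta_act a q : a \in G -> theta (realAct a q) = smashAct a (theta q).
Proof.
move=> ha; rewrite -(rcls_rep q); move: (rep q) => [y u] /=.
have [g [x [hg ->]]] := dec_exists y.
rewrite realAct_rcls // -ms_act_mul // thetaT; last by rewrite /pmul groupM.
rewrite thetaT // smashAct_scls //; congr scls; congr rcls.
by rewrite pactUM pmulV -pmulA pmulVg pmulg1.
Qed.

Lemma theta_cont V : smashOpen V -> realOpen (fun q => V (theta q)).
Proof.
move=> hV y; have [g [x [hg ->]]] := dec_exists y.
apply: (simp_open_pact (a := g) (d := ms_deg x) (W := fun w => V (scls G g (rcls x w)))).
- exact: (deg_act_eta L).
- move=> u; by rewrite thetaT.
- exact: hV.
Qed.

Lemma theta_open U : realOpen U ->
  smashOpen (fun s => exists q, U q /\ theta q = s).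
Proof.
move=> hU g hg x.
apply: (simp_open_pact (a := (g^-1)%g) (d := pact g (ms_deg x))
   (W := fun u => U (rcls (ms_act g (eta x)) u))).
- by rewrite pactK.
- move=> w; rewrite invgK; split.
  + move=> [q [Uq eq]]; have := f_equal psi eq.
    rewrite psi_theta psi_scls /psi0 /= hg psiA_rcls // => <-; exact: Uq.
  + move=> Uq; exists (rcls (ms_act g (eta x)) (pactU g w)); split => //.
    by rewrite thetaT // pactUK.
- have := hU (ms_act g (eta x)); by rewrite (deg_act_eta L).
Qed.

End Theta.

Theorem proposition5p4 (k : nat) (H G : {group 'S_k}) (hHG : H \subset G) :
  exists theta : forall (A : mss H) (B : mss G) (eta : A -> B),
      is_lan eta -> Real B -> Smash G A,
    (forall A B eta (L : is_lan eta), based_G_iso (theta A B eta L)) /\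
    (forall (A A' : mss H) (B B' : mss G) (eta : A -> B) (eta' : A' -> B')
       (L : is_lan eta) (L' : is_lan eta') (phi : A -> A') (chi : B -> B'),
       is_hom H phi -> is_hom G chi ->
       (forall x, chi (eta x) = eta' (phi x)) ->
       forall q, theta A' B' eta' L' (realMap chi q)
                 = smashMap phi (theta A B eta L q)).
Proof.
exists (fun A B eta L => theta L); split.
- move=> A B eta L; split.
  + exists (psi eta). move=> q; exact: (psi_theta hHG L q). move=> s; exact: (theta_psi hHG L s).
  + exact: theta_cont.
  + move=> U hU; exact: (theta_open hHG hU).
  + exact: theta_base.
  + move=> a q ha; exact: theta_act.
- move=> A A' B B' eta eta' L L' phi chi hphi hchi hce q.
  rewrite -(rcls_rep q); move: (rep q) => [y u] /=.
  have [g [x [hg ->]]] := dec_exists L y.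
  rewrite (realMap_rcls hchi).
  have -> : chi (ms_act g (eta x)) = ms_act g (eta' (phi x)).
    by case: hchi => _ _ hact _; rewrite hact // hce.
  by rewrite !thetaT // smashMap_scls // (realMap_rcls hphi).
Qed.
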